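(* Let $a>b\ge 1$ be integers, $n=a+b$, and let $\breve{K}_{a,b}$ be the Mycielskian of the complete bipartite graph $K_{a,b}$. Then $$E_{\chi}(\breve{K}_{a,b})=1+\frac{2(b+1)}{2n+1},\qquad V_{\chi}(\breve{K}_{a,b})=\frac{16a^2+4b^2+8a^2b+8b^2a+24ab+8a+2b}{(2n+1)^3}.$$
   Context: Mycielskian: for a graph $G$ with vertex set $\{v_1,\dots,v_m\}$, its Mycielskian $\breve{G}$ is the graph with vertex set $\{v_1,\dots,v_m\}\cup\{u_1,\dots,u_m\}\cup\{u\}$ (all new, distinct vertices) whose edges are: all edges of $G$; the edge $u_iv_j$ whenever $v_iv_j$ is an edge of $G$; and the edges $uu_i$ for all $i$. Colouring parameters: for a proper colouring $\mathcal{C}=\{c_1,\dots,c_k\}$ of $G$ with colours indexed $1,\dots,k$, let $\theta(c_i)$ be the number of vertices of colour $c_i$ and $f(i)=\theta(c_i)/|V(G)|$. The colouring mean is $\mu_{\mathcal{C}}=\sum_i i\,f(i)$, the colouring variance is $\sum_i (i-\mu_{\mathcal{C}})^2 f(i)$, and the colouring sum is $\sum_i i\,\theta(c_i)$. The $\chi$-chromatic mean $E_\chi(G)$ (resp. $\chi$-chromatic variance $V_\chi(G)$) is the colouring mean (resp. variance) of a proper colouring of $G$ with exactly $\chi(G)$ colours $c_1,\dots,c_{\chi(G)}$ whose colouring sum is minimum among all such colourings. *)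

(* Defs.v *)
From HB Require Import structures.
From mathcomp Require Import all_boot all_order all_algebra.
Set Implicit Arguments. Unset Strict Implicit. Unset Printing Implicit Defensive.
Import Order.TTheory GRing.Theory Num.Theory.

Definition Kab (a b : nat) : rel ('I_a + 'I_b)%type :=
  fun x y => match x, y with
             | inl _, inr _ | inr _, inl _ => true
             | _, _ => false end.

Arguments Kab : clear implicits.

(* Mycielskian: vertices Some (inl v) = v_i (original), Some (inr v) = u_i
   (copy), None = u. *)
Notation myc_vertex T := (option (T + T)%type).

Definition myc (T : finType) (e : rel T) : rel (myc_vertex T) :=
  fun x y => match x, y with
             | Some (inl x), Some (inl y) => e x y
             | Some (inl x), Some (inr y) => e y x
             | Some (inr x), Some (inl y) => e x y
             | Some (inr _), Some (inr _) => false
             | None, Some (inr _) | Some (inr _), None => true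
             | _, _ => false end.

(* Proper colouring with k colours; colour index i : 'I_k stands for c_{i+1}. *)
Definition proper_colouring (T : finType) (e : rel T) (k : nat) (c : T -> 'I_k) : Prop :=
  forall x y, e x y -> c x != c y.

Definition colourable (T : finType) (e : rel T) (k : nat) : Prop :=
  exists c : T -> 'I_k, proper_colouring e c.

Definition is_chromatic_number (T : finType) (e : rel T) (k : nat) : Prop :=
  colourable e k /\ forall k', k' < k -> ~ colourable e k'.

Definition theta (T : finType) (k : nat) (c : T -> 'I_k) (i : 'I_k) : nat :=
  #|[set x | c x == i]|.

Definition colouring_sum (T : finType) (k : nat) (c : T -> 'I_k) : nat :=
  \sum_(i < k) i.+1 * theta c i.

Local Open Scope ring_scope.

Definition freq (T : finType) (k : nat) (c : T -> 'I_k) (i : 'I_k) : rat :=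
  (theta c i)%:R / (#|T|)%:R.

Definition colouring_mean (T : finType) (k : nat) (c : T -> 'I_k) : rat :=
  \sum_(i < k) (i.+1)%:R * freq c i.

Definition colouring_variance (T : finType) (k : nat) (c : T -> 'I_k) : rat :=
  \sum_(i < k) ((i.+1)%:R - colouring_mean c) ^+ 2 * freq c i.

(* Main.v *)
Require Import Defs.
From HB Require Import structures.
From mathcomp Require Import all_boot all_order all_algebra.
From mathcomp Require Import zify ring lra.
Import Order.TTheory GRing.Theory Num.Theory.

Lemma big_optionT (T : finType) (f : option T -> nat) :
  \sum_(x : option T) f x = f None + \sum_(x : T) f (Some x).
Proof.
by rewrite ![index_enum _]unlock [@Finite.enum in LHS]unlock /= big_cons big_map.
Qed.

Lemma big_sumT (T1 T2 : finType) (f : (T1 + T2)%type -> nat) :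
  \sum_(x : T1 + T2) f x = \sum_(x : T1) f (inl x) + \sum_(x : T2) f (inr x).
Proof. by rewrite big_sumType. Qed.

Lemma sumV a b (f : myc_vertex ('I_a + 'I_b)%type -> nat) :
  \sum_x f x = f None + ((\sum_(i < a) f (Some (inl (inl i))) + \sum_(i < b) f (Some (inl (inr i))))
     + (\sum_(i < a) f (Some (inr (inl i))) + \sum_(i < b) f (Some (inr (inr i))))).
Proof. by rewrite big_optionT !big_sumT. Qed.

Lemma theta_sum (T : finType) k (c : T -> 'I_k) i : theta c i = \sum_x (c x == i : nat).
Proof.
rewrite /theta -sum1dep_card big_mkcond /=; apply: eq_bigr => x _; by case: eqP.
Qed.

Lemma sum_const_ord n (m : nat) : \sum_(i < n) m = n * m.
Proof. by rewrite big_const_ord iter_addn_0 mulnC. Qed.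

Lemma sum_all1 n (f : 'I_n -> nat) : (forall i, f i = 1) -> \sum_i f i = n.
Proof. by move=> h; rewrite (eq_bigr (fun _ => 1)) // sum_const_ord muln1. Qed.

Lemma sum_ge_term (T : finType) (f : T -> nat) x : f x <= \sum_y f y.
Proof. by rewrite (bigD1 x) //= leq_addr. Qed.

Definition o0 : 'I_3 := @Ordinal 3 0 isT.
Definition o1 : 'I_3 := @Ordinal 3 1 isT.
Definition o2 : 'I_3 := @Ordinal 3 2 isT.

Lemma sum3n (F : 'I_3 -> nat) : \sum_i F i = F o0 + F o1 + F o2.
Proof.
rewrite !big_ord_recl big_ord0 addn0 addnA. congr (F _ + F _ + F _); exact: val_inj.
Qed.

Lemma sum3q (F : 'I_3 -> rat) : (\sum_i F i = F o0 + F o1 + F o2)%R.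
Proof.
rewrite !big_ord_recl big_ord0 GRing.addr0 GRing.addrA; congr (F _ + F _ + F _)%R; exact: val_inj.
Qed.

Definition c0 a b (x : myc_vertex ('I_a + 'I_b)%type) : 'I_3 :=
  match x with None => o2 | Some (inl (inl _)) | Some (inr (inl _)) => o0 | _ => o1 end.

Lemma c0_proper a b : proper_colouring (myc (Kab a b)) (@c0 a b).
Proof. by move=> [[[i|j]|[i|j]]|] [[[i'|j']|[i'|j']]|]. Qed.

Lemma c0_sum a b : colouring_sum (@c0 a b) = 2 * a + 4 * b + 3.
Proof.
rewrite /colouring_sum sum3n !theta_sum !sumV /= !sum_const_ord /=. lia.
Qed.

Lemma cardV a b : #|{: myc_vertex ('I_a + 'I_b)%type}| = (2 * (a + b) + 1)%N.
Proof. rewrite -sum1_card. rewrite sumV !sum_const_ord. lia. Qed.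

Lemma no2col a b k (c : myc_vertex ('I_a + 'I_b)%type -> 'I_k) (i0 : 'I_a) (j0 : 'I_b) :
  proper_colouring (myc (Kab a b)) c ->
  let x1 := Some (inl (inl i0)) in let x2 := Some (inl (inr j0)) in
  let x3 := Some (inr (inl i0)) in let x4 := None in let x5 := Some (inr (inr j0)) in
  [/\ (c x1 : nat) <> c x2, (c x2 : nat) <> c x3, (c x3 : nat) <> c x4,
      (c x4 : nat) <> c x5 & (c x5 : nat) <> c x1].
Proof.
move=> hc /=.
have h : forall x y, myc (Kab a b) x y -> (c x : nat) <> c y.
  by move=> x y /hc /eqP hne heq; apply: hne; apply: val_inj.
by split; apply: h.
Qed.

Lemma indep a b (c : myc_vertex ('I_a + 'I_b)%type -> 'I_3) :
  (b < a)%N -> proper_colouring (myc (Kab a b)) c ->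
  2 * b + 1 <= \sum_x (c x != o0 : nat).
Proof.
move=> hba hc; rewrite sumV.
have E : forall x y, myc (Kab a b) x y -> c x = o0 -> (c y != o0 : nat) = 1.
  by move=> x y /hc hne hx; move: hne; rewrite hx eq_sym => ->.
case: (eqVneq (c None) o0) => hN.
  rewrite (@sum_all1 _ (fun i => (c (Some (inr (inl i))) != o0 : nat))); last first.
    by move=> i; apply: (E None).
  rewrite (@sum_all1 _ (fun i => (c (Some (inr (inr i))) != o0 : nat))); last first.
    by move=> i; apply: (E None).
  lia.
case: (pickP (fun i => c (Some (inl (inl i))) == o0)) => [i /eqP Hi | HA].
  rewrite (@sum_all1 _ (fun j => (c (Some (inl (inr j))) != o0 : nat))); last first.
    by move=> j; apply: (E (Some (inl (inl i)))).
  rewrite (@sum_all1 _ (fun j => (c (Some (inr (inr j))) != o0 : nat))); last first.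
    by move=> j; apply: (E (Some (inl (inl i)))).
  simpl.
  lia.
case: (pickP (fun j => c (Some (inl (inr j))) == o0)) => [j /eqP Hj | HB].
  rewrite (@sum_all1 _ (fun i => (c (Some (inl (inl i))) != o0 : nat))); last first.
    by move=> i; apply: (E (Some (inl (inr j)))).
  rewrite (@sum_all1 _ (fun i => (c (Some (inr (inl i))) != o0 : nat))); last first.
    by move=> i; apply: (E (Some (inl (inr j)))).
  simpl.
  lia.
rewrite (@sum_all1 _ (fun i => (c (Some (inl (inl i))) != o0 : nat))); last first.
  by move=> i; rewrite HA.
rewrite (@sum_all1 _ (fun j => (c (Some (inl (inr j))) != o0 : nat))); last first.
  by move=> j; rewrite HB.
simpl.
lia.
Qed.

Local Open Scope ring_scope.

Theorem theorem2p5 (a b : nat) (hba : (b < a)%N) (hb : (1 <= b)%N) (k : nat)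
  (hk : is_chromatic_number (myc (Kab a b)) k)
  (c : myc_vertex ('I_a + 'I_b)%type -> 'I_k)
  (hc : proper_colouring (myc (Kab a b)) c)
  (hmin : forall c' : myc_vertex ('I_a + 'I_b)%type -> 'I_k,
      proper_colouring (myc (Kab a b)) c' -> (colouring_sum c <= colouring_sum c')%N) :
  let n := (a + b)%N in
  colouring_mean c = 1 + (2 * (b + 1))%:R / (2 * n + 1)%:R :> rat /\
  colouring_variance c =
    (16 * a ^ 2 + 4 * b ^ 2 + 8 * a ^ 2 * b + 8 * b ^ 2 * a + 24 * a * b
     + 8 * a + 2 * b)%:R / ((2 * n + 1) ^ 3)%:R :> rat.
Proof.
have ha0 : (0 < a)%N by lia.
pose i0 : 'I_a := Ordinal ha0.
pose j0 : 'I_b := Ordinal hb.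
have k3 : k = 3%N.
  case: hk => [[c1 hc1] hlt].
  have [h1 h2 h3 h4 h5] := @no2col a b _ c1 i0 j0 hc1.
  have := ltn_ord (c1 (Some (inl (inl i0)))).
  have := ltn_ord (c1 (Some (inl (inr j0)))).
  have := ltn_ord (c1 (Some (inr (inl i0)))).
  have := ltn_ord (c1 None).
  have := ltn_ord (c1 (Some (inr (inr j0)))).
  have : ~ (3 < k)%N.
    by move=> /hlt; apply; exists (@c0 a b); apply: c0_proper.
  move=> H0 H1 H2 H3 H4 H5.
  move: H0 H1 H2 H3 H4 H5 h1 h2 h3 h4 h5.
  set y1 := nat_of_ord (c1 (Some (inl (inl i0)))).
  set y2 := nat_of_ord (c1 (Some (inl (inr j0)))).
  set y3 := nat_of_ord (c1 (Some (inr (inl i0)))).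
  set y4 := nat_of_ord (c1 None).
  set y5 := nat_of_ord (c1 (Some (inr (inr j0)))).
  lia.
subst k.
set th := theta c.
have hsum : (th o0 + th o1 + th o2 = 2 * (a + b) + 1)%N.
  rewrite /th !theta_sum -!big_split /= -(cardV a b) -sum1_card.
  by apply: eq_bigr => x _; case: (c x) => [[|[|[|m]]] Hm].
have hnz : (2 * b + 1 <= th o1 + th o2)%N.
  apply: leq_trans (@indep a b c hba hc) _.
  rewrite /th !theta_sum -big_split /=; apply: eq_leq; apply: eq_bigr => x _.
  by case: (c x) => [[|[|[|m]]] Hm].
have hcs : (th o0 + 2 * th o1 + 3 * th o2 <= 2 * a + 4 * b + 3)%N.
  have H := hmin _ (@c0_proper a b).
  rewrite c0_sum in H.
  move: H; rewrite /colouring_sum sum3n /th /=; lia.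
have h2 : (1 <= th o2)%N.
  have [h1 h2 h3 h4 h5] := @no2col a b _ c i0 j0 hc.
  have key : forall x, (c x : nat) = 2%N -> (1 <= th o2)%N.
    move=> x hx; rewrite /th theta_sum (bigD1 x) //=.
    have -> : c x = o2 by apply: val_inj.
    by rewrite eqxx.
  have := key (Some (inl (inl i0))).
  have := key (Some (inl (inr j0))).
  have := key (Some (inr (inl i0))).
  have := key None.
  have := key (Some (inr (inr j0))).
  have := ltn_ord (c (Some (inl (inl i0)))).
  have := ltn_ord (c (Some (inl (inr j0)))).
  have := ltn_ord (c (Some (inr (inl i0)))).
  have := ltn_ord (c None).
  have := ltn_ord (c (Some (inr (inr j0)))).
  move: h1 h2 h3 h4 h5.
  set y1 := nat_of_ord (c (Some (inl (inl i0)))).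
  set y2 := nat_of_ord (c (Some (inl (inr j0)))).
  set y3 := nat_of_ord (c (Some (inr (inl i0)))).
  set y4 := nat_of_ord (c None).
  set y5 := nat_of_ord (c (Some (inr (inr j0)))).
  lia.
have e0 : th o0 = (2 * a)%N by lia.
have e1 : th o1 = (2 * b)%N by lia.
have e2 : th o2 = 1%N by lia.
rewrite /colouring_variance /colouring_mean !sum3q /freq -/th e0 e1 e2 cardV /=.
split; field; have ha2 := ler0n rat a; have hb2 := ler0n rat b; apply: lt0r_neq0; lra.
Qed.
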